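(* Let $(X,d)$ be a finite ultrametric space with $|X|\geqslant 2$ whose diametral graph $G_d$ is complete bipartite, $G_d=G[X_1,X_2]$. If $(X_i,d)\in\mathfrak U$ for $i=1,2$ and $\operatorname{Sp}(X_1)\cap\operatorname{Sp}(X_2)=\varnothing$, then $(X,d)\in\mathfrak U$.
   Context: $\operatorname{Sp}(X)=\{d(x,y):x,y\in X,\ x\neq y\}$ (empty for one-point spaces); $\operatorname{diam}X=\max d(x,y)$. $\mathfrak U$ is the class of finite ultrametric spaces $X$ with $|\operatorname{Sp}(X)|=|X|-1$. The diametral graph $G_d$ has vertex set $X$ and edges the pairs $\{u,v\}$ with $d(u,v)=\operatorname{diam}X$; $G[X_1,X_2]$ is the complete bipartite graph with parts $X_1,X_2$. $(X_i,d)$ denotes the subspace with the restricted metric. *)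

(* Defs.v *)
From mathcomp Require Import all_boot all_order all_algebra.
Set Implicit Arguments. Unset Strict Implicit. Unset Printing Implicit Defensive.
Import Order.TTheory GRing.Theory Num.Theory.
Local Open Scope ring_scope.

Definition is_metric (R : realDomainType) (T : finType) (d : T -> T -> R) :=
  [/\ forall x y, 0 <= d x y,
      forall x y, (d x y = 0) <-> (x = y),
      forall x y, d x y = d y x &
      forall x y z, d x z <= d x y + d y z].

Definition is_ultrametric (R : realDomainType) (T : finType) (d : T -> T -> R) :=
  is_metric d /\ forall x y z, d x z <= Num.max (d x y) (d y z).

Definition Sp (R : realDomainType) (T : finType) (d : T -> T -> R) (A : {set T})
  : seq R :=
  undup [seq d p.1 p.2 | p <- enum [set p : T * T | (p.1 \in A) && (p.2 \in A)
                                                    && (p.1 != p.2)]].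

Definition diam (R : realDomainType) (T : finType) (d : T -> T -> R) (A : {set T}) : R :=
  \big[Num.max/0]_(p : T * T | (p.1 \in A) && (p.2 \in A)) d p.1 p.2.

Definition in_U (R : realDomainType) (T : finType) (d : T -> T -> R) (A : {set T}) :=
  size (Sp d A) = #|A|.-1.

(* The diametral graph of (T,d) is the complete bipartite graph G[X1,X2]:
   X1, X2 is a partition of T into nonempty parts, and for u, v in T,
   {u,v} is an edge (d u v = diam T) iff u, v lie in different parts. *)
Definition diametral_complete_bipartite (R : realDomainType) (T : finType)
  (d : T -> T -> R) (X1 X2 : {set T}) :=
  [/\ X1 != set0, X2 != set0, [disjoint X1 & X2], X1 :|: X2 = [set: T] &
      forall u v, u != v ->
        (d u v = diam d [set: T] <->
          (u \in X1 /\ v \in X2) \/ (u \in X2 /\ v \in X1))].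

(* Main.v *)
Require Import Defs.
From mathcomp Require Import all_boot all_order all_algebra.
Import Order.TTheory GRing.Theory Num.Theory.
Local Open Scope ring_scope.

Lemma SpP (R : realDomainType) (T : finType) (d : T -> T -> R) (A : {set T}) r :
  reflect (exists x y, [/\ x \in A, y \in A, x != y & r = d x y]) (r \in Sp d A).
Proof.
rewrite /Sp mem_undup; apply: (iffP mapP).
- by case=> [[x y]]; rewrite mem_enum inE /= => /andP[/andP[? ?] ?] ->; exists x, y.
- case=> x [y [xA yA xy ->]]; exists (x, y) => //.
  by rewrite mem_enum inE /= xA yA xy.
Qed.

Theorem corollary15 (R : realDomainType) (T : finType) (d : T -> T -> R)
  (X1 X2 : {set T}) :
  is_ultrametric d ->
  (2 <= #|T|)%N ->
  diametral_complete_bipartite d X1 X2 ->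
  in_U d X1 -> in_U d X2 ->
  (forall r, r \in Sp d X1 -> r \notin Sp d X2) ->
  in_U d [set: T].
Proof.
move=> _ _ [n1 n2 dis U12 Hd] U1 U2 Hsp.
set D := diam d [set: T].
have ndis x : x \in X1 -> x \in X2 -> False.
  by move=> h1 h2; move/disjointFr: dis => /(_ x h1); rewrite h2.
have notD A : (A = X1 \/ A = X2) -> D \notin Sp d A.
  move=> hA; apply/SpP => -[x [y [xA yA xy e]]].
  have := (Hd x y xy).1 (esym e).
  case: hA => ?; subst A; case=> -[a b].
  - exact: (ndis y).
  - exact: (ndis x).
  - exact: (ndis x).
  - exact: (ndis y).
have inU x : (x \in X1) || (x \in X2).
  by rewrite -in_setU U12 inE.
have eqm : Sp d [set: T] =i D :: (Sp d X1 ++ Sp d X2).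
  move=> r; rewrite inE mem_cat; apply/SpP/idP.
  - case=> x [y [_ _ xy ->]].
    case/orP: (inU x) => hx; case/orP: (inU y) => hy.
    + by apply/orP; right; apply/orP; left; apply/SpP; exists x, y.
    + by apply/orP; left; apply/eqP; apply/(Hd x y xy).2; left.
    + by apply/orP; left; apply/eqP; apply/(Hd x y xy).2; right.
    + by apply/orP; right; apply/orP; right; apply/SpP; exists x, y.
  - case/orP => [/eqP ->|/orP[]/SpP[x [y [hx hy xy ->]]]]; last 2 first.
    + by exists x, y; rewrite !inE.
    + by exists x, y; rewrite !inE.
    case/set0Pn: n1 => x hx; case/set0Pn: n2 => y hy.
    have xy : x != y by apply/eqP => exy; subst y; exact: ndis hx hy.
    by exists x, y; split; rewrite ?inE //; symmetry; apply/(Hd x y xy).2; left.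
have uq : uniq (D :: (Sp d X1 ++ Sp d X2)).
  rewrite /= mem_cat negb_or (notD X1) ?(notD X2); [|by right|by left].
  rewrite cat_uniq /Sp !undup_uniq /= andbT.
  apply/hasPn => r h2; apply/negP => h1; by move: (Hsp r h1); rewrite h2.
have uS : uniq (Sp d [set: T]) by rewrite /Sp undup_uniq.
have := uniq_size_uniq uq (fun r => esym (eqm r)); rewrite uS => /esym/eqP.
rewrite /in_U => ->.
rewrite /= size_cat U1 U2 -U12 cardsU.
move: dis; rewrite -setI_eq0 => /eqP ->; rewrite cards0 subn0.
move: n1 n2; rewrite -!card_gt0.
by case: #|X1| => // a _; case: #|X2| => // b _; rewrite /= addnS.
Qed.
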